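(* Let $n\ge2$, $h=0$, $\epsilon\in[-1,1]$. For any two distinct stable states $s_1,s_2\in\mathcal X_s$, $$\Gamma_s:=\Phi(s_1,s_2)-H(s_1)=\begin{cases}\frac{n^2}{2}+|\epsilon|n & n\text{ even},\\ \frac{n^2-1}{2}+|\epsilon|(n+1) & n\text{ odd}.\end{cases}$$
   Context: Setup. The graph $\mathcal G(2,n)$ has vertex set $V=V^{(1)}\cup V^{(2)}$ with $V^{(1)}=\{1,\dots,n\}$, $V^{(2)}=\{n+1,\dots,2n\}$; its edge set is $E=E_{\mathrm{int}}\cup E_{\mathrm{cross}}$, where $E_{\mathrm{int}}$ consists of all pairs of distinct vertices in the same $V^{(k)}$ and $E_{\mathrm{cross}}=\{\{i,i+n\}:1\le i\le n\}$. The configuration space is $\mathcal X=\{-1,+1\}^V$ and $H(\sigma)=-\sum_{\{i,j\}\in E_{\mathrm{int}}}\sigma_i\sigma_j-\epsilon\sum_{\{i,j\}\in E_{\mathrm{cross}}}\sigma_i\sigma_j-h\sum_{i\in V}\sigma_i$. The stable states $\mathcal X_s$ are the global minimizers of $H$. Two configurations are neighbours if they differ at exactly one vertex; a path is a finite sequence of configurations with consecutive ones neighbours; $\Phi(\eta,\eta')=\min_{\omega:\eta\to\eta'}\max_{\zeta\in\omega}H(\zeta)$, the minimum over paths from $\eta$ to $\eta'$. *)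

(* Defs.v *)
From HB Require Import structures.
From mathcomp Require Import all_boot all_order all_algebra.
Set Implicit Arguments. Unset Strict Implicit. Unset Printing Implicit Defensive.
Import Order.TTheory GRing.Theory Num.Theory.
Local Open Scope ring_scope.

(* Vertices of G(2,n): 'I_(n+n); vertex v (0-based) lies in V^(1) iff v < n.
   Paper vertex i (1..n) is index i-1, paper vertex i+n is index n+i-1. *)
Definition vertex (n : nat) := 'I_(n + n).

(* Configurations: true = +1, false = -1. *)
Definition config (n : nat) := {ffun vertex n -> bool}.

Definition spin (R : ringType) (b : bool) : R := if b then 1 else -1.

Definition same_block (n : nat) (i j : vertex n) : bool := (i < n)%N == (j < n)%N.

(* H(sigma) = - sum_{E_int} s_i s_j - eps sum_{E_cross} s_i s_j - h sum_i s_i.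
   Each unordered internal edge {i,j} is counted once via i < j. *)
Definition Ham (R : ringType) (n : nat) (eps h : R) (s : config n) : R :=
  - (\sum_(i : vertex n) \sum_(j : vertex n | ((i < j)%N && same_block i j))
        spin R (s i) * spin R (s j))
  - eps * (\sum_(i < n) spin R (s (lshift n i)) * spin R (s (rshift n i)))
  - h * (\sum_(i : vertex n) spin R (s i)).

Definition stable (R : realDomainType) (n : nat) (eps h : R) (s : config n) : Prop :=
  forall t : config n, Ham eps h s <= Ham eps h t.

Definition neighb (n : nat) (s t : config n) : bool :=
  #|[set v : vertex n | s v != t v]| == 1%N.

Definition is_path (n : nat) (eta eta' : config n) (p : seq (config n)) : bool :=
  path (@neighb n) eta p && (last eta p == eta').

Definition path_max (R : realDomainType) (n : nat) (eps h : R)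
    (eta : config n) (p : seq (config n)) : R :=
  foldr Num.max (Ham eps h eta) (map (Ham eps h) p).

Definition is_Phi (R : realDomainType) (n : nat) (eps h : R)
    (eta eta' : config n) (v : R) : Prop :=
  (exists p, is_path eta eta' p /\ path_max eps h eta p = v) /\
  (forall p, is_path eta eta' p -> v <= path_max eps h eta p).

(* Main.v *)
Require Import Defs.
From HB Require Import structures.
From mathcomp Require Import all_boot all_order all_algebra.
From mathcomp Require Import ring lra zify.
Import Order.TTheory GRing.Theory Num.Theory.
Local Open Scope ring_scope.

Module Aux.
Set Implicit Arguments. Unset Strict Implicit. Unset Printing Implicit Defensive.

Definition blkA n (s : config n) (i : 'I_n) : bool := s (lshift n i).
Definition blkB n (s : config n) (i : 'I_n) : bool := s (rshift n i).
Definition mm (R : ringType) n (a : 'I_n -> bool) : R := \sum_i spin R (a i).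
Definition cc (R : ringType) n (a b : 'I_n -> bool) : R :=
  \sum_i spin R (a i) * spin R (b i).

Lemma spin2 (R : ringType) b : spin R b * spin R b = 1.
Proof. by case: b; rewrite /spin ?mulr1 ?mulrNN ?mulr1. Qed.

Lemma sq_sum (R : comRingType) (I : finType) (F : I -> R) :
  (\sum_i F i) * (\sum_i F i) = \sum_i \sum_j F i * F j.
Proof. rewrite mulr_suml; apply: eq_bigr => i _; by rewrite mulr_sumr. Qed.

Lemma Ham_eq (R : realFieldType) n (eps : R) (s : config n) :
  Ham eps 0 s = n%:R - (mm R (blkA s) ^+ 2 + mm R (blkB s) ^+ 2) / 2
                 - eps * cc R (blkA s) (blkB s).
Proof.
rewrite /Ham mul0r subr0.
set S := \sum_i _.
pose f (i j : vertex n) : R := if same_block i j then spin R (s i) * spin R (s j) else 0.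
have HS : S = \sum_(i : vertex n) \sum_(j : vertex n | (i < j)%N) f i j.
  by apply: eq_bigr => i _; rewrite big_mkcondr.
have Hsym : forall i j, f i j = f j i.
  by move=> i j; rewrite /f /same_block eq_sym mulrC.
have Hdiag : forall i, f i i = 1 by move=> i; rewrite /f /same_block eqxx spin2.
have Hfull : \sum_(i : vertex n) \sum_(j : vertex n) f i j = 2 * S + (n + n)%:R.
  have E1 : forall i : vertex n, \sum_j f i j = \sum_(j : vertex n | (i < j)%N) f i j
        + \sum_(j : vertex n | (j < i)%N) f i j + f i i.
    move=> i; rewrite (bigID (fun j : vertex n => (i < j)%N)) /= -addrA; congr (_ + _).
    rewrite (bigID (fun j : vertex n => (j < i)%N)) /=; congr (_ + _).
      by apply: eq_bigl => j; case: ltngtP.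
    rewrite (big_pred1 i) // => j /=; rewrite -leqNgt -leqNgt eq_sym -eqn_leq.
    by apply/idP/idP => [/eqP/val_inj->|/eqP->].
  rewrite (eq_bigr _ (fun i _ => E1 i)) !big_split /= -HS.
  have -> : \sum_(i : vertex n) \sum_(j : vertex n | (j < i)%N) f i j = S.
    rewrite HS (eq_bigr (fun i : vertex n => \sum_(j : vertex n) if (j < i)%N then f i j else 0));
      last by move=> i _; rewrite big_mkcond.
    rewrite exchange_big /=; apply: eq_bigr => i _.
    by rewrite [RHS]big_mkcond; apply: eq_bigr => j _; rewrite Hsym.
  rewrite (eq_bigr (fun _ => 1)) // sumr_const card_ord. by rewrite mulr2n mulrDl mul1r.
have Hq : \sum_(i : vertex n) \sum_(j : vertex n) f i j = mm R (blkA s) ^+ 2 + mm R (blkB s) ^+ 2.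
  rewrite big_split_ord /= !expr2 !sq_sum; congr (_ + _); apply: eq_bigr => i _;
    rewrite big_split_ord /= /f /same_block /=.
    rewrite [X in _ + X]big1 ?addr0.
      by apply: eq_bigr => j _; rewrite !ltn_ord.
    by move=> j _; rewrite ltn_ord ltnNge leq_addr.
  rewrite [X in X + _]big1 ?add0r.
    by apply: eq_bigr => j _; rewrite !ltnNge !leq_addr /=.
  by move=> j _; rewrite ltn_ord ltnNge leq_addr.
have : 2 * S = mm R (blkA s) ^+ 2 + mm R (blkB s) ^+ 2 - (n + n)%:R.
  by rewrite -Hq Hfull; ring.
rewrite natrD /cc /blkA /blkB => H2.
have -> : S = (mm R (blkA s) ^+ 2 + mm R (blkB s) ^+ 2 - (n%:R + n%:R)) / 2.
  by rewrite -H2 mulrC mulKf // pnatr_eq0.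
by rewrite /blkA /blkB; field.
Qed.

Definition cnt n (a : 'I_n -> bool) : nat := (\sum_i (a i : nat))%N.

Lemma spin_nat (R : ringType) (b : bool) : spin R b = 2 * (b : nat)%:R - 1.
Proof. by case: b; rewrite /spin /= ?mulr0 ?sub0r // mulr1; rewrite -addrA subrr addr0. Qed.

Lemma mm_cnt (R : realFieldType) n (a : 'I_n -> bool) :
  mm R a = 2 * (cnt a)%:R - n%:R.
Proof.
rewrite /mm /cnt (eq_bigr _ (fun i _ => spin_nat R (a i))) sumrB natr_sum mulr_sumr.
by rewrite sumr_const card_ord.
Qed.

Lemma spin_abs (R : realFieldType) b : `|spin R b| = 1.
Proof. by case: b; rewrite /spin ?normrN normr1. Qed.

Lemma mm_le (R : realFieldType) n (a : 'I_n -> bool) : `|mm R a| <= n%:R.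
Proof.
apply: le_trans (ler_norm_sum _ _ _) _.
by rewrite (eq_bigr (fun _ => 1)) ?sumr_const ?card_ord // => i _; rewrite spin_abs.
Qed.

Lemma cc_le1 (R : realFieldType) n (a b : 'I_n -> bool) :
  cc R a b <= n%:R - `|mm R a - mm R b|.
Proof.
rewrite lerBrDr addrC -lerBrDr /mm -sumrB.
apply: le_trans (ler_norm_sum _ _ _) _.
have hn : (n%:R : R) = \sum_(i < n) 1 by rewrite sumr_const card_ord.
rewrite /cc hn -sumrB; apply: ler_sum => i _.
by case: (a i); case: (b i); rewrite /spin /= ler_norml; lra.
Qed.

Lemma cc_le2 (R : realFieldType) n (a b : 'I_n -> bool) :
  - cc R a b <= n%:R - `|mm R a + mm R b|.
Proof.
rewrite lerBrDr addrC -lerBrDr opprK /mm -big_split /=.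
apply: le_trans (ler_norm_sum _ _ _) _.
have hn : (n%:R : R) = \sum_(i < n) 1 by rewrite sumr_const card_ord.
rewrite /cc hn -big_split; apply: ler_sum => i _.
by case: (a i); case: (b i); rewrite /spin /= ler_norml; lra.
Qed.

Lemma cc_abs (R : realFieldType) n (a b : 'I_n -> bool) : `|cc R a b| <= n%:R.
Proof.
have h1 := cc_le1 R a b; have h2 := cc_le2 R a b.
have := normr_ge0 (mm R a - mm R b); have := normr_ge0 (mm R a + mm R b).
rewrite ler_norml; lra.
Qed.

Lemma Ham_lb (R : realFieldType) n (eps : R) (s : config n) :
  n%:R - n%:R ^+ 2 - `|eps| * n%:R <= Ham eps 0 s.
Proof.
rewrite Ham_eq.
have ha := mm_le R (blkA s); have hb := mm_le R (blkB s).
have hc := cc_abs R (blkA s) (blkB s).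
have he : eps * cc R (blkA s) (blkB s) <= `|eps| * n%:R.
  apply: le_trans (ler_norm _) _; rewrite normrM; apply: ler_wpM2l => //.
have a2 : mm R (blkA s) ^+ 2 <= n%:R ^+ 2.
  by rewrite -real_normK ?num_real // ler_sqr ?nnegrE // (le_trans _ ha).
have b2 : mm R (blkB s) ^+ 2 <= n%:R ^+ 2.
  by rewrite -real_normK ?num_real // ler_sqr ?nnegrE // (le_trans _ hb).
lra.
Qed.

Lemma mm_top (R : realFieldType) n (a : 'I_n -> bool) :
  mm R a = n%:R -> forall i, a i.
Proof.
move=> h i.
have : \sum_j (1 - spin R (a j)) == 0.
  by rewrite sumrB sumr_const card_ord -/(mm R a) h subrr.
rewrite psumr_eq0; last by move=> j _; case: (a j); rewrite /spin; lra.
move/allP/(_ i (mem_index_enum _)) => /=.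
by case: (a i) => //; rewrite /spin opprK -(natrD R 1 1) pnatr_eq0.
Qed.

Lemma mm_bot (R : realFieldType) n (a : 'I_n -> bool) :
  mm R a = - n%:R -> forall i, ~~ a i.
Proof.
move=> h i.
have : \sum_j (1 + spin R (a j)) == 0.
  by rewrite big_split sumr_const card_ord -/(mm R a) h /= subrr.
rewrite psumr_eq0; last by move=> j _; case: (a j); rewrite /spin; lra.
move/allP/(_ i (mem_index_enum _)) => /=.
by case: (a i) => //; rewrite /spin -(natrD R 1 1) pnatr_eq0.
Qed.

Definition Fv (R : realFieldType) n (eps : R) (a b : 'I_n -> bool) : R :=
  n%:R - (mm R a ^+ 2 + mm R b ^+ 2) / 2 - eps * cc R a b.

Lemma ccC (R : realFieldType) n (a b : 'I_n -> bool) : cc R a b = cc R b a.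
Proof. by apply: eq_bigr => i _; rewrite mulrC. Qed.

Lemma FvC (R : realFieldType) n (eps : R) (a b : 'I_n -> bool) : Fv eps a b = Fv eps b a.
Proof. by rewrite /Fv ccC [mm R a ^+ 2 + _]addrC. Qed.

Lemma Ham_Fv (R : realFieldType) n (eps : R) (s : config n) :
  Ham eps 0 s = Fv eps (blkA s) (blkB s).
Proof. exact: Ham_eq. Qed.

Lemma Fv_ext (R : realFieldType) n (eps : R) (a b a' b' : 'I_n -> bool) :
  a =1 a' -> b =1 b' -> Fv eps a b = Fv eps a' b'.
Proof.
move=> ha hb; rewrite /Fv.
have -> : mm R a = mm R a' by apply: eq_bigr => i _; rewrite ha.
have -> : mm R b = mm R b' by apply: eq_bigr => i _; rewrite hb.
have -> : cc R a b = cc R a' b' by apply: eq_bigr => i _; rewrite ha hb.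
by [].
Qed.

Lemma const_mm (R : realFieldType) n (b : 'I_n -> bool) β :
  (forall i, b i = β) -> mm R b = spin R β * n%:R.
Proof.
move=> h; rewrite /mm (eq_bigr (fun _ => spin R β)) ?sumr_const ?card_ord ?mulr_natr //.
by move=> i _; rewrite h.
Qed.

Lemma const_cc (R : realFieldType) n (a b : 'I_n -> bool) β :
  (forall i, b i = β) -> cc R a b = spin R β * mm R a.
Proof.
move=> h; rewrite /cc /mm mulr_sumr; apply: eq_bigr => i _; by rewrite h mulrC.
Qed.

Definition Hmin (R : realFieldType) n (eps : R) : R := n%:R - n%:R ^+ 2 - `|eps| * n%:R.

Lemma spinsq (R : realFieldType) b : spin R b ^+ 2 = 1.
Proof. by rewrite expr2 spin2. Qed.

Lemma Hmin_att (R : realFieldType) n (eps : R) :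
  exists t : config n, Ham eps 0 t = Hmin n eps.
Proof.
exists [ffun v : vertex n => if (val v < n)%N then true else (0 <= eps)].
rewrite Ham_Fv /Fv.
have hA : forall i, blkA [ffun v : vertex n => if (val v < n)%N then true else (0 <= eps)] i = true.
  by move=> i; rewrite /blkA ffunE /= ltn_ord.
have hB : forall i, blkB [ffun v : vertex n => if (val v < n)%N then true else (0 <= eps)] i = (0 <= eps).
  by move=> i; rewrite /blkB ffunE /= ltnNge leq_addr.
rewrite (const_cc R _ hB) (const_mm R hA) (const_mm R hB) !exprMn !spinsq /Hmin /spin /=.
by case: ger0P => he /=; field.


Qed.

Lemma stable_Hmin (R : realFieldType) n (eps : R) (s : config n) :
  stable eps 0 s -> Ham eps 0 s = Hmin n eps.
Proof.
move=> st; case: (Hmin_att n eps) => t ht.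
apply/eqP; rewrite eq_le -{1}ht st /=; exact: Ham_lb.
Qed.

Lemma sq_n_const (R : realFieldType) n (a : 'I_n -> bool) :
  mm R a ^+ 2 = n%:R ^+ 2 -> exists β, forall i, a i = β.
Proof.
move/eqP; rewrite eqf_sqr => /orP[/eqP h|/eqP h].
  by exists true => i; apply: (mm_top h).
by exists false => i; apply/negbTE; apply: (mm_bot h).
Qed.

Lemma Hmin_const (R : realFieldType) n (eps : R) (s : config n) :
  Ham eps 0 s = Hmin n eps ->
  (exists α, forall i, blkA s i = α) /\ (exists β, forall i, blkB s i = β).
Proof.
rewrite Ham_eq /Hmin => h.
have ha := mm_le R (blkA s); have hb := mm_le R (blkB s).
have hc := cc_abs R (blkA s) (blkB s).
have he : eps * cc R (blkA s) (blkB s) <= `|eps| * n%:R.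
  apply: le_trans (ler_norm _) _; rewrite normrM; apply: ler_wpM2l => //.
have a2 : mm R (blkA s) ^+ 2 <= n%:R ^+ 2.
  by rewrite -real_normK ?num_real // ler_sqr ?nnegrE // (le_trans _ ha).
have b2 : mm R (blkB s) ^+ 2 <= n%:R ^+ 2.
  by rewrite -real_normK ?num_real // ler_sqr ?nnegrE // (le_trans _ hb).
split; apply: sq_n_const; lra.
Qed.

Definition Gam (R : realFieldType) n (eps : R) : R :=
  if odd n
  then ((n%:R ^+ 2 - 1) / 2 + `|eps| * (n.+1)%:R)
  else (n%:R ^+ 2 / 2 + `|eps| * n%:R).

Lemma mm_int (R : realFieldType) n (a : 'I_n -> bool) :
  if odd n then is_true (1 <= `|mm R a|) else (mm R a = 0 \/ 2 <= `|mm R a|).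
Proof.
rewrite mm_cnt.
have hn : (n%:R : R) = 2 * (n./2)%:R + (odd n)%:R.
  by rewrite -{1}(odd_double_half n) natrD -muln2 natrM mulrC addrC.
rewrite hn; move: (cnt a) (n./2) => k q.
case: (odd n) => /=.
  case: (leqP k q) => h.
    have : (k%:R : R) <= q%:R by rewrite ler_nat.
    by move=> h'; rewrite ler_normr; apply/orP; right; lra.
  have : (q%:R + 1 : R) <= k%:R by rewrite natr1 ler_nat.
  by move=> h'; rewrite ler_normr; apply/orP; left; lra.
case: (ltngtP k q) => h.
- have : (k%:R + 1 : R) <= q%:R by rewrite natr1 ler_nat.
  by move=> h'; right; rewrite ler_normr; apply/orP; right; lra.
- have : (q%:R + 1 : R) <= k%:R by rewrite natr1 ler_nat.
  by move=> h'; right; rewrite ler_normr; apply/orP; left; lra.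
- by left; rewrite h; ring.
Qed.

Lemma up_real (R : realFieldType) n (eps x σ : R) :
  (2 <= n)%N -> `|eps| <= 1 -> σ ^+ 2 = 1 ->
  (if odd n then is_true (1 <= `|x|) else (x = 0 \/ 2 <= `|x|)) ->
  n%:R - (x ^+ 2 + n%:R ^+ 2) / 2 - eps * (σ * x) <= Hmin n eps + Gam n eps.
Proof.
move=> hn he hs hx.
have hsig : `|σ| = 1.
  by apply/eqP; rewrite -(@eqrXn2 _ 2) ?normr_ge0 // real_normK ?num_real ?hs ?expr1n.
have hb : - (eps * (σ * x)) <= `|eps| * `|x|.
  by apply: le_trans (ler_norm _) _; rewrite normrN !normrM hsig mul1r.
have hx2 : x ^+ 2 = `|x| ^+ 2 by rewrite real_normK ?num_real.
have e0 := normr_ge0 eps.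
rewrite /Hmin /Gam -(natr1 n); move: hx; case: (odd n) => hx.
  have := @mulr_ge0 _ (`|x| - 1) (`|x| + 1 - 2 * `|eps|); rewrite hx2.
  move=> H; have {}H := H (ltac:(lra)) (ltac:(lra)).
  have H2 : 0 <= `|x| ^+ 2 - 2 * `|eps| * `|x| - 1 + 2 * `|eps|.
    by apply: le_trans H _; rewrite le_eqVlt; apply/orP; left; apply/eqP; ring.
  lra.
case: hx => hx.
  rewrite hx expr2 mul0r mulr0 mulr0; lra.
have := @mulr_ge0 _ `|x| (`|x| - 2 * `|eps|); rewrite hx2.
move=> H; have {}H := H (ltac:(lra)) (ltac:(lra)).
have H2 : 0 <= `|x| ^+ 2 - 2 * `|eps| * `|x|.
  by apply: le_trans H _; rewrite le_eqVlt; apply/orP; left; apply/eqP; ring.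
lra.
Qed.

Lemma low_even (R : realFieldType) n (eps : R) (a b : 'I_n -> bool) :
  (2 <= n)%N -> `|eps| <= 1 -> ~~ odd n -> mm R a = 0 ->
  Hmin n eps + Gam n eps <= Fv eps a b.
Proof.
move=> hn he hodd ha; rewrite /Hmin /Gam (negbTE hodd) /Fv ha.
have h1 := cc_le1 R a b; have h2 := cc_le2 R a b; rewrite ha sub0r normrN add0r in h1 h2.
have hb := mm_le R b.
have hc : eps * cc R a b <= `|eps| * (n%:R - `|mm R b|).
  apply: le_trans (ler_norm _) _; rewrite normrM; apply: ler_wpM2l => //.
  by rewrite ler_norml; lra.
have hn2 : (2 : R) <= n%:R by rewrite (ler_nat R 2 n).
have hy2 : mm R b ^+ 2 = `|mm R b| ^+ 2 by rewrite real_normK ?num_real.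
have e0 := normr_ge0 eps.
have := @mulr_ge0 _ (n%:R - `|mm R b|) (n%:R + `|mm R b| - 2 * `|eps|).
move=> H; have {}H := H (ltac:(lra)) (ltac:(have := normr_ge0 (mm R b); lra)).
rewrite hy2 expr0n /=; nra.
Qed.

Lemma low_odd (R : realFieldType) n (eps : R) (a a' b : 'I_n -> bool) :
  (2 <= n)%N -> `|eps| <= 1 -> odd n -> mm R a ^+ 2 = 1 -> mm R a + mm R a' = 0 ->
  `|cc R a b - cc R a' b| = 2 ->
  Hmin n eps + Gam n eps <= Num.max (Fv eps a b) (Fv eps a' b).
Proof.
move=> hn he hodd ha haa hcc.
have ha' : mm R a' ^+ 2 = 1 by rewrite (_ : mm R a' = - mm R a) ?sqrrN //; lra.
have h1 := cc_le1 R a b; have h2 := cc_le2 R a b.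
have h1' := cc_le1 R a' b; have h2' := cc_le2 R a' b.
have ea : mm R a' = - mm R a by lra.
rewrite ea in h1' h2'.
set c := cc R a b in h1 h2 hcc *; set c' := cc R a' b in h1' h2' hcc *.
set y := mm R b in h1 h2 h1' h2' *.
set x := mm R a in ha h1 h2 h1' h2' *.
have hY : 2 * `|y| <= `|x - y| + `|- x - y|.
  have -> : 2 * `|y| = `|(x - y) + (- x - y)|.
    by rewrite (_ : (x - y) + (- x - y) = - (2 * y)); [rewrite normrN normrM ger0_norm | ring].
  exact: ler_normD.
have hY' : 2 * `|y| <= `|x + y| + `|- x + y|.
  have -> : 2 * `|y| = `|(x + y) + (- x + y)|.
    by rewrite (_ : (x + y) + (- x + y) = (2 * y)); [rewrite normrM ger0_norm | ring].
  exact: ler_normD.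
have hsum : `|c + c'| <= 2 * (n%:R - `|y|).
  rewrite ler_norml; apply/andP; split; lra.
have hb := mm_le R b.
have hn2 : (2 : R) <= n%:R by rewrite (ler_nat R 2 n).
have hy2 : y ^+ 2 = `|y| ^+ 2 by rewrite real_normK ?num_real.
have e0 := normr_ge0 eps.
have hmax : Fv eps a b + Fv eps a' b + `|Fv eps a b - Fv eps a' b| <= 2 * Num.max (Fv eps a b) (Fv eps a' b).
  case: (lerP (Fv eps a b) (Fv eps a' b)) => h.
    lra.
  lra.
have hd : `|Fv eps a b - Fv eps a' b| = 2 * `|eps|.
  rewrite /Fv -/x -/y -/c -/c' ha ha'.
  have -> : n%:R - (1 + y ^+ 2) / 2 - eps * c - (n%:R - (1 + y ^+ 2) / 2 - eps * c') = - (eps * (c - c')) by ring.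
  by rewrite normrN normrM hcc mulrC.
have hs : eps * (c + c') <= `|eps| * (2 * (n%:R - `|y|)).
  apply: le_trans (ler_norm _) _; rewrite normrM; apply: ler_wpM2l => //.
have := @mulr_ge0 _ (n%:R - `|y|) (n%:R + `|y| - 2 * `|eps|).
move=> H; have {}H := H (ltac:(lra)) (ltac:(have := normr_ge0 y; lra)).
move: hmax; rewrite hd /Fv -/x -/y -/c -/c' ha ha' /Hmin /Gam hodd -(natr1 n) hy2 => hmax.
nra.
Qed.

Definition flipped n (a a' : 'I_n -> bool) :=
  exists i, a' i = ~~ a i /\ forall j, j != i -> a' j = a j.

Lemma flipped_sym n (a a' : 'I_n -> bool) : flipped a a' -> flipped a' a.
Proof.
case=> i [h1 h2]; exists i; split; first by rewrite h1 negbK.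
by move=> j hj; rewrite h2.
Qed.

Lemma flipped_cnt n (a a' : 'I_n -> bool) :
  flipped a a' -> (cnt a <= (cnt a').+1)%N /\ (cnt a' <= (cnt a).+1)%N.
Proof.
case=> i [h1 h2].
have e1 : cnt a = (a i + \sum_(j | j != i) (a j : nat))%N by rewrite /cnt (bigD1 i).
have e2 : cnt a' = (a' i + \sum_(j | j != i) (a j : nat))%N.
  rewrite /cnt (bigD1 i) //=; congr (_ + _)%N; by apply: eq_bigr => j hj; rewrite h2.
rewrite e1 e2.
rewrite h1; case: (a i) => /=; lia.
Qed.

Lemma flipped_cc (R : realFieldType) n (a a' b : 'I_n -> bool) :
  flipped a a' -> `|cc R a b - cc R a' b| = 2.
Proof.
case=> i [h1 h2].
set S := \sum_(j | j != i) spin R (a j) * spin R (b j).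
have e1 : cc R a b = spin R (a i) * spin R (b i) + S by rewrite /cc (bigD1 i).
have e2 : cc R a' b = spin R (a' i) * spin R (b i) + S.
  rewrite /cc (bigD1 i) //=; congr (_ + _); by apply: eq_bigr => j hj; rewrite h2.
rewrite e1 e2.
have -> : forall u v : R, u + S - (v + S) = u - v by move=> u v; ring.
have key : forall z : R, (z = 2 \/ z = -2) -> `|z| = 2.
  by move=> z [->|->]; rewrite ?normrN ger0_norm.
apply: key; rewrite h1.
by case: (a i); case: (b i); rewrite /spin /=; [left|right|right|left]; ring.
Qed.

Lemma neighb_sym n (x y : config n) : neighb x y -> neighb y x.
Proof.
rewrite /neighb; congr (_ == _); apply: eq_card => v; by rewrite !inE eq_sym.
Qed.

Lemma neighb_split n (x y : config n) : neighb x y ->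
  (blkB x =1 blkB y /\ flipped (blkA x) (blkA y)) \/
  (blkA x =1 blkA y /\ flipped (blkB x) (blkB y)).
Proof.
move/cards1P => [v hv].
have hin : forall w, (x w != y w) = (w == v).
  by move=> w; move/setP: hv => /(_ w); rewrite !inE.
have hv1 : y v = ~~ x v.
  by move: (hin v); rewrite eqxx; case: (x v); case: (y v).
have ho : forall w, w != v -> y w = x w.
  by move=> w hw; move: (hin w); rewrite (negbTE hw); move/negbFE/eqP.
case: (split_ordP v) => i hi; subst v; [left | right]; split.
- move=> j; rewrite /blkB ho //; apply/eqP => /(congr1 val) /=.
  have := ltn_ord i; lia.
- exists i; split; first by rewrite /blkA.
  by move=> j hj; rewrite /blkA ho //; apply: contra hj => /eqP/lshift_inj ->.
- move=> j; rewrite /blkA ho //; apply/eqP => /(congr1 val) /=.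
  have := ltn_ord j; lia.
- exists i; split; first by rewrite /blkB.
  by move=> j hj; rewrite /blkB ho //; apply: contra hj => /eqP/rshift_inj ->.
Qed.

Lemma path_cross (T : eqType) (e : rel T) (P : pred T) x0 p :
  path e x0 p -> P x0 -> ~~ P (last x0 p) ->
  exists x y, [/\ x \in x0 :: p, y \in x0 :: p, e x y, P x & ~~ P y].
Proof.
elim: p x0 => [|y p IH] x0 /=; first by move=> _ ->.
case/andP => exy hp hx hl.
case hy: (P y).
  have [x' [y' [h1 h2 h3 h4 h5]]] := IH y hp hy hl.
  by exists x', y'; split => //; rewrite inE ?h1 ?h2 orbT.
by exists x0, y; split => //; rewrite ?inE ?eqxx ?orbT // hy.
Qed.

Lemma pm_ge (R : realFieldType) n (eps : R) (eta x : config n) p :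
  x \in eta :: p -> Ham eps 0 x <= path_max eps 0 eta p.
Proof.
elim: p => [|y p IH]; first by rewrite inE => /eqP ->.
rewrite /path_max /= le_max -/(path_max eps 0 eta p).
rewrite !inE; case/or3P => [h|/eqP->|h].
- by apply/orP; right; apply: IH; rewrite inE h.
- by rewrite lexx.
- by apply/orP; right; apply: IH; rewrite inE h orbT.
Qed.

Lemma pm_le (R : realFieldType) n (eps : R) (eta : config n) p (T : R) :
  Ham eps 0 eta <= T -> all (fun x => Ham eps 0 x <= T) p -> path_max eps 0 eta p <= T.
Proof.
move=> h0; elim: p => [|y p IH] //= /andP [hy hp].
by rewrite /path_max /= ge_max hy IH.
Qed.

Lemma cnt_const n (a : 'I_n -> bool) α : (forall i, a i = α) -> cnt a = (α * n)%N.
Proof.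
move=> h; rewrite /cnt (eq_bigr (fun _ => nat_of_bool α)) ?big_const_ord ?iter_addn_0 //.
by move=> i _; rewrite h.
Qed.

Lemma block_low (R : realFieldType) n (eps : R) (P Q : config n -> 'I_n -> bool)
    s1 s2 p α :
  (2 <= n)%N -> `|eps| <= 1 ->
  (forall s, Ham eps 0 s = Fv eps (P s) (Q s)) ->
  (forall x y, neighb x y -> (Q x =1 Q y /\ flipped (P x) (P y)) \/ P x =1 P y) ->
  is_path s1 s2 p -> (forall i, P s1 i = α) -> (forall i, P s2 i = ~~ α) ->
  Hmin n eps + Gam n eps <= path_max eps 0 s1 p.
Proof.
move=> hn he hF hN /andP [hp /eqP hl] h1 h2.
have step : forall x y, neighb x y ->
    (cnt (P x) <= (cnt (P y)).+1)%N /\ (cnt (P y) <= (cnt (P x)).+1)%N.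
  move=> x y /hN [[_ /flipped_cnt] //|he'].
  have e : cnt (P x) = cnt (P y) by apply: eq_bigr => i _; rewrite he'.
  rewrite e; lia.
set t := n./2.
have ht := odd_double_half n; rewrite -/t -muln2 in ht.
have c1 := cnt_const h1; have c2 := cnt_const h2.
have [x [y [hx hy hxy cx cy]]] : exists x y, [/\ x \in s1 :: p, y \in s1 :: p, neighb x y,
    cnt (P x) = t.+1 & cnt (P y) = t].
  case: α h1 h2 c1 c2 => h1 h2 c1 c2.
    have [x [y [hx hy hxy px py]]] := @path_cross _ _ (fun z => t < cnt (P z))%N _ _ hp
      (ltac:(rewrite /= c1; case: (odd n) ht => /=; lia))
      (ltac:(rewrite /= hl c2; lia)).
    exists x, y; split => //; move: (step x y hxy) px py => /=; lia.
  have [x [y [hx hy hxy px py]]] := @path_cross _ _ (fun z => cnt (P z) <= t)%N _ _ hp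
      (ltac:(rewrite /= c1; lia))
      (ltac:(rewrite /= hl c2; case: (odd n) ht => /=; lia)).
  have [ex ey] : cnt (P y) = t.+1 /\ cnt (P x) = t by move: (step x y hxy) px py => /=; lia.
  by exists y, x; split => //; exact: neighb_sym.
have hnR : (n%:R : R) = 2 * t%:R + (odd n)%:R.
  by rewrite -{1}ht natrD natrM mulrC addrC.
case ho: (odd n) hnR => hnR.
  have [[hq hf] | hp'] := hN x y hxy; last first.
    have e : cnt (P x) = cnt (P y) by apply: eq_bigr => i _; rewrite hp'.
    by move: cx; rewrite e cy; lia.
  have mx : mm R (P x) = 1 by rewrite mm_cnt cx hnR -(natr1 t) /=; ring.
  have my : mm R (P y) = -1 by rewrite mm_cnt cy hnR /=; ring.
  have := low_odd (a := P x) (a' := P y) (b := Q x) hn he ho (ltac:(rewrite mx; ring)) (ltac:(rewrite mx my; ring))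
    (flipped_cc R (Q x) hf).
  rewrite (Fv_ext eps (a := P y) (a' := P y) (b := Q x) (b' := Q y)) // -!hF.
  move/le_trans; apply; rewrite ge_max !pm_ge //.
have my : mm R (P y) = 0 by rewrite mm_cnt cy hnR /=; ring.
have := low_even (Q y) hn he (negbT ho) my.
by rewrite -hF => /le_trans; apply; apply: pm_ge.
Qed.

Lemma Fv_const_up (R : realFieldType) n (eps : R) (a b : 'I_n -> bool) β :
  (2 <= n)%N -> `|eps| <= 1 -> (forall i, b i = β) ->
  Fv eps a b <= Hmin n eps + Gam n eps.
Proof.
move=> hn he hb; rewrite /Fv (const_mm R hb) (const_cc R a hb) exprMn spinsq mul1r.
apply: up_real => //; first exact: spinsq.
exact: mm_int.
Qed.

Definition tk n (s1 s2 : config n) k : config n :=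
  [ffun v : vertex n => if (val v < k)%N then s2 v else s1 v].

Lemma tk0 n (s1 s2 : config n) : tk s1 s2 0 = s1.
Proof. by apply/ffunP => v; rewrite ffunE. Qed.

Lemma tkN n (s1 s2 : config n) : tk s1 s2 (n + n) = s2.
Proof. by apply/ffunP => v; rewrite ffunE ltn_ord. Qed.

Lemma path_build n (s1 s2 : config n) (G : pred (config n)) :
  (forall k, (k <= n + n)%N -> G (tk s1 s2 k)) ->
  exists p, is_path s1 s2 p /\ all G p.
Proof.
move=> hG.
have : forall k, (k <= n + n)%N ->
    exists p, [/\ path (@neighb n) s1 p, last s1 p = tk s1 s2 k & all G p].
  elim => [|k IH] hk.
    by exists [::]; split => //; rewrite tk0.
  have [p [hp hl ha]] := IH (ltnW hk).
  case e: (tk s1 s2 k == tk s1 s2 k.+1).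
    by exists p; split => //; rewrite hl (eqP e).
  exists (rcons p (tk s1 s2 k.+1)); split.
  - rewrite rcons_path hp hl /=.
    pose vk := Ordinal hk.
    have hd : s1 vk != s2 vk.
      apply: contraFN e => /eqP hs; apply/eqP/ffunP => w; rewrite !ffunE.
      case: (ltngtP (val w) k) => hw.
      + by have -> : (val w < k.+1)%N = true by lia.
      + by have -> : (val w < k.+1)%N = false by lia.
      + by rewrite hw ltnSn (_ : w = vk) //; apply: val_inj.
    apply/cards1P; exists vk; apply/setP => w; rewrite !inE !ffunE.
    case: (ltngtP (val w) k) => hw.
    + have -> : (val w < k.+1)%N = true by lia.
      by rewrite eqxx /=; apply/esym/negbTE/eqP => /(congr1 val) /= h; move: hw; rewrite /= h ltnn.
    + have -> : (val w < k.+1)%N = false by lia.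
      by rewrite eqxx /=; apply/esym/negbTE/eqP => /(congr1 val) /= h; move: hw; rewrite /= h ltnn.
    + have ew : w = vk by apply: val_inj.
      by rewrite hw ltnSn ew eqxx.
  - by rewrite last_rcons.
  - by rewrite all_rcons hG // ha.
move/(_ (n + n) (leqnn _)) => [p [hp hl ha]].
by exists p; split => //; rewrite /is_path hp hl tkN eqxx.
Qed.
End Aux.
Import Aux.

Theorem corollary4p6 (R : realFieldType) (n : nat) (eps : R) :
  (2 <= n)%N -> -1 <= eps <= 1 ->
  forall s1 s2 : config n,
    stable eps 0 s1 -> stable eps 0 s2 -> s1 != s2 ->
    is_Phi eps 0 s1 s2
      (Ham eps 0 s1 +
       (if odd n
        then ((n%:R ^+ 2 - 1) / 2 + `|eps| * (n.+1)%:R)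
        else (n%:R ^+ 2 / 2 + `|eps| * n%:R))).
Proof.
move=> hn /andP [e1 e2] s1 s2 st1 st2 neq.
have he : `|eps| <= 1 by rewrite ler_norml e1 e2.
have H1 := stable_Hmin st1; have H2 := stable_Hmin st2.
have -> : Ham eps 0 s1 + (if odd n then ((n%:R ^+ 2 - 1) / 2 + `|eps| * (n.+1)%:R)
        else (n%:R ^+ 2 / 2 + `|eps| * n%:R)) = Hmin n eps + Gam n eps by rewrite H1.
have [[α1 hA1] [β1 hB1]] := Hmin_const H1.
have [[α2 hA2] [β2 hB2]] := Hmin_const H2.
have low : forall p, is_path s1 s2 p -> Hmin n eps + Gam n eps <= path_max eps 0 s1 p.
  move=> p hp.
  have [hα | hβ] : α1 != α2 \/ β1 != β2.
    case: (eqVneq α1 α2) => [ea|]; last by left.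
    case: (eqVneq β1 β2) => [eb|]; last by right.
    exfalso; move/negP: neq; apply; apply/eqP/ffunP => v.
    case: (split_ordP v) => i ->.
      by move: (hA1 i) (hA2 i); rewrite /blkA ea => -> ->.
    by move: (hB1 i) (hB2 i); rewrite /blkB eb => -> ->.
  - apply: (@block_low R n eps (@blkA n) (@blkB n) s1 s2 p α1) => //.
    + by move=> s; exact: Ham_Fv.
    + by move=> x y /neighb_split [[h h']|[h h']]; [left | right].
    + by move=> i; rewrite hA2; move: hα; case: (α1); case: (α2).
  - apply: (@block_low R n eps (@blkB n) (@blkA n) s1 s2 p β1) => //.
    + by move=> s; rewrite Ham_Fv FvC.
    + by move=> x y /neighb_split [[h h']|[h h']]; [right | left].
    + by move=> i; rewrite hB2; move: hβ; case: (β1); case: (β2).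
have good : forall k, (k <= n + n)%N ->
    (fun x => Ham eps 0 x <= Hmin n eps + Gam n eps) (tk s1 s2 k).
  move=> k hk /=; rewrite Ham_Fv.
  case: (leqP k n) => hkn.
    apply: (@Fv_const_up R n eps _ _ β1) => // i.
    by rewrite /blkB ffunE /= ltnNge (leq_trans hkn (leq_addr _ _)) /=; apply: hB1.
  rewrite FvC; apply: (@Fv_const_up R n eps _ _ α2) => // i.
  by rewrite /blkA ffunE /= (ltn_trans (ltn_ord i) hkn); apply: hA2.
have [p [hp hall]] := @path_build n s1 s2 (fun x => Ham eps 0 x <= Hmin n eps + Gam n eps) good.
split; last exact: low.
exists p; split => //; apply/eqP; rewrite eq_le low // andbT.
apply: pm_le => //; by have := good 0 (leq0n _); rewrite tk0.
Qed.
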